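(* Let $x_1\ge x_2\ge\cdots\ge x_n\ge 0$ be integers and suppose there is a set $S\subseteq[n]$ of size $q$ such that $x_i=0$ for all $i\in S$. Increase $x_i$ by $1$ for every $i\in S$. Then $\Phi=\sum_{i=1}^n x_i^2$ increases by exactly $q$, and $\Psi = n\sum_i|x_i|+\sum_{i<j}|x_i-x_j|$ increases by at least $q^2$. *)

(* Defs.v *)
From mathcomp Require Import all_boot all_order all_algebra.
Set Implicit Arguments. Unset Strict Implicit. Unset Printing Implicit Defensive.
Import Order.TTheory GRing.Theory Num.Theory.
Local Open Scope ring_scope.

Definition Phi (n : nat) (x : 'I_n -> int) : int := \sum_(i < n) x i ^+ 2.

Definition Psi (n : nat) (x : 'I_n -> int) : int :=
  (n%:R * \sum_(i < n) `|x i|) + \sum_(i < n) \sum_(j < n | (i < j)%N) `|x i - x j|.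

Definition incr_on (n : nat) (S : {set 'I_n}) (x : 'I_n -> int) : 'I_n -> int :=
  fun i => x i + (i \in S)%:R.

(* Main.v *)
Require Import Defs.
From mathcomp Require Import all_boot all_order all_algebra.
From mathcomp Require Import ring lra.
Import Order.TTheory GRing.Theory Num.Theory.
Local Open Scope ring_scope.

Lemma sum_ind (n : nat) (S : {set 'I_n}) :
  \sum_(i < n) ((i \in S)%:R : int) = #|S|%:R.
Proof.
rewrite -sum1_card natr_sum [RHS]big_mkcond; by apply: congr_big => // i _; case: (i \in S).
Qed.

Lemma sym_half (n : nat) (f : 'I_n -> 'I_n -> int) :
  (forall i j, f i j = f j i) -> (forall i, f i i = 0) ->
  \sum_(i < n) \sum_(j < n) f i j = 2%:R * \sum_(i < n) \sum_(j < n | (i < j)%N) f i j.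
Proof.
move=> fs f0.
have E : forall i : 'I_n, \sum_(j < n) f i j =
   \sum_(j < n | (i < j)%N) f i j + \sum_(j < n) (if (j < i)%N then f i j else 0).
  move=> i; rewrite (bigID (fun j : 'I_n => (i < j)%N)) /=; congr (_ + _).
  rewrite big_mkcond /=; apply: eq_bigr => j _.
  case: ltngtP => h //=.
  by have -> : i = j by apply: val_inj.
under eq_bigr do rewrite E.
rewrite big_split /= exchange_big /= mulr_natl mulr2n; congr (_ + _).
apply: eq_bigr => i _; rewrite [RHS]big_mkcond /=; apply: eq_bigr => j _.
by case: ifP => //; rewrite fs.
Qed.

Lemma babs (a c : bool) :
  `|(a%:R : int) - c%:R| = a%:R + c%:R - 2%:R * a%:R * c%:R.
Proof. by case: a; case: c. Qed.

Theorem proposition6p3 (n q : nat) (x : 'I_n -> int) (S : {set 'I_n})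
  (hnonneg : forall i, 0 <= x i)
  (hmono : forall i j : 'I_n, (i <= j)%N -> x j <= x i)
  (hS : #|S| = q)
  (hzero : forall i, i \in S -> x i = 0) :
  Phi (incr_on S x) = Phi x + q%:R /\
  Psi x + (q ^ 2)%:R <= Psi (incr_on S x).
Proof.
set b := fun i : 'I_n => ((i \in S)%:R : int).
have hb : forall i, incr_on S x i = x i + b i by [].
have sb : \sum_(i < n) b i = q%:R by rewrite sum_ind hS.
split.
  rewrite /Phi. have := congr1 (fun t => \sum_(i < n) x i ^+ 2 + t) sb => /= <-. rewrite -big_split /=; apply: eq_bigr => i _; rewrite hb /b.
  case: (boolP (i \in S)) => h; first by rewrite hzero.
  by rewrite /= !addr0.
have sa : \sum_(i < n) `|incr_on S x i| = \sum_(i < n) `|x i| + q%:R.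
  rewrite -sb -big_split /=; apply: eq_bigr => i _; rewrite hb.
  rewrite !ger0_norm //; apply: addr_ge0 => //; rewrite /b; by case: (i \in S).
set N : int := n%:R. set Q : int := q%:R.
set D := \sum_(i < n) \sum_(j < n | (i < j)%N) `|b i - b j|.
have hD : 2%:R * D = 2%:R * (N * Q - Q * Q).
  rewrite -sym_half; last 2 first.
  - by move=> i j; rewrite distrC.
  - by move=> i; rewrite subrr normr0.
  have hb2 : forall i j, `|b i - b j| = b i + b j - 2%:R * b i * b j.
    by move=> i j; exact: babs.
  have inner : forall i, \sum_(j < n) `|b i - b j| = b i * N + Q - 2%:R * b i * Q.
    move=> i; under eq_bigr => j _ do rewrite hb2.
    rewrite big_split /= sumrN big_split /= sumr_const card_ord -mulr_sumr sb.
    by rewrite /N /Q !mulr_natr.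
  under eq_bigr => i _ do rewrite inner.
  rewrite big_split /= sumrN big_split /= sumr_const card_ord -!mulr_suml -mulr_sumr sb.
  rewrite -mulr_natr /N /Q; ring.
have hD' : D = N * Q - Q * Q.
  by apply: (mulfI (_ : 2%:R != 0 :> int)) => //.
have hP : \sum_(i < n) \sum_(j < n | (i < j)%N) `|x i - x j| - D <=
          \sum_(i < n) \sum_(j < n | (i < j)%N) `|incr_on S x i - incr_on S x j|.
  rewrite /D -sumrB; apply: ler_sum => i _; rewrite -sumrB; apply: ler_sum => j _.
  rewrite lerBlDr !hb.
  have -> : x i - x j = (x i + b i - (x j + b j)) - (b i - b j) by ring.
  exact: ler_normB.
rewrite /Psi sa natrX -/Q.
move: hP; rewrite hD'.
set P := \sum_(i < n) _.
set P' := \sum_(i < n) _.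
move=> hP. rewrite mulrDr. lra.
Qed.
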